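(* Let \[ f(x):=(x-r)\prod_{j=2}^n(x-x_j)=x^n+a_1x^{n-1}+a_2x^{n-2}+\cdots+a_n \] be a real polynomial, where $r>0$ and $x_2,\ldots,x_n$ are nonzero complex numbers such that $\mathrm{Re}(x_j)\le0$ for all $j\in\{2,\ldots,n\}$ and $\mathrm{Re}(x_j)<0$ for some $j\in\{2,\ldots,n\}$. Assume that $\prod_{j=2}^n(x-x_j)$ is not of the form $(x+\mu)\prod_{j=1}^m(x^2+\beta_j^2)$ with $\mu,\beta_1,\ldots,\beta_m>0$ (where $n-1=2m+1$). Then for each $k\in\{1,2,\ldots,n-2\}$, $a_k\le0$ implies $a_{k+2}<0$. *)

(* Defs.v *)
From mathcomp Require Import all_boot all_order all_algebra.
From mathcomp Require Export complex.
Set Implicit Arguments. Unset Strict Implicit. Unset Printing Implicit Defensive.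
Import Order.TTheory GRing.Theory Num.Theory.
Local Open Scope ring_scope.

Definition excluded_form (R : rcfType) (p : {poly R[i]}) : Prop :=
  exists (mu : R) (m : nat) (beta : 'I_m -> R),
    0 < mu /\ (forall j, 0 < beta j) /\
    p = map_poly (real_complex R)
          (('X + mu%:P) * \prod_(j < m) ('X ^+ 2 + (beta j ^+ 2)%:P)).

(* Main.v *)
Require Import Defs.
From mathcomp Require Import all_boot all_order all_algebra.
From mathcomp Require Import complex.
From mathcomp Require Import zify ring lra.
Set Implicit Arguments. Unset Strict Implicit. Unset Printing Implicit Defensive.
Import Order.TTheory GRing.Theory Num.Theory.
Local Open Scope ring_scope.


Section SeqPart.
Variable R : realFieldType.
Implicit Types A : int -> R.

Definition allowed (k t : nat) := ~~ odd t || odd k.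

Definition Fam A := forall k t : nat, allowed k t ->
  forall a b c d : int, b = a + Posz k -> c = a - Posz t -> d = a + Posz k + Posz t ->
  A c * A d <= A a * A b.

Lemma allowedK k t : odd k -> allowed k t.
Proof. by move=> h; rewrite /allowed h orbT. Qed.
Lemma allowedT k t : ~~ odd t -> allowed k t.
Proof. by move=> h; rewrite /allowed h. Qed.

Lemma C1 A (F : Fam A) k t (ok : allowed k t) (a a' b b' c c' d d' : int) :
  a' = a - 1 -> b = a + Posz k -> b' = b - 1 -> c = a - Posz t -> c' = c - 1 ->
  d = b + Posz t -> d' = d - 1 ->
  0 <= A a * A b' + A a' * A b - A c * A d' - A c' * A d.
Proof.
move: ok; rewrite /allowed => ok ea' eb eb' ec ec' ed ed'.
case: t ok ec ed => [|t] ok ec ed.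
  have -> : c = a by lia. have -> : c' = a' by lia.
  have -> : d = b by lia. have -> : d' = b' by lia. lra.
case: (boolP (odd t.+1)) => Ht.
  have Hk : odd k by move: ok; rewrite Ht.
  have kpos : (0 < k)%N by case: k Hk {ok eb}.
  have H1 := F k.-1 t.+2 ltac:(by rewrite /allowed /= negbK -[odd t]negbK -/(odd t.+1) Ht) a b' c' d
    ltac:(lia) ltac:(lia) ltac:(lia).
  have H2 := F k.+1 t ltac:(by rewrite /allowed -[odd t]negbK -/(odd t.+1) Ht) a' b c d'
    ltac:(lia) ltac:(lia) ltac:(lia).
  lra.
case: k ok eb => [|k] ok eb.
  have H1 := F 1 t.+1 (@allowedK 1 _ erefl) a' a c' d ltac:(lia) ltac:(lia) ltac:(lia).
  have H2 := F 1 t (@allowedK 1 _ erefl) a' a c d' ltac:(lia) ltac:(lia) ltac:(lia).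
  have -> : b = a by lia. have -> : b' = a' by lia. lra.
have H1 := F k t.+1 ltac:(by rewrite /allowed Ht) a b' c d' ltac:(lia) ltac:(lia) ltac:(lia).
have H2 := F k.+2 t.+1 ltac:(by rewrite /allowed Ht) a' b c' d ltac:(lia) ltac:(lia) ltac:(lia).
lra.
Qed.

Lemma allowedSS k t : allowed k.+2 t = allowed k t.
Proof. by rewrite /allowed /= negbK. Qed.
Lemma allowedtSS k t : allowed k t.+2 = allowed k t.
Proof. by rewrite /allowed /= negbK. Qed.

Lemma C2 A (F : Fam A) k t (ok : allowed k t) (a a' b b' c c' d d' : int) :
  a' = a - 2 -> b = a + Posz k -> b' = b - 2 -> c = a - Posz t -> c' = c - 2 ->
  d = b + Posz t -> d' = d - 2 ->
  0 <= A a * A b' + A a' * A b - A c * A d' - A c' * A d.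
Proof.
move=> ea' eb eb' ec ec' ed ed'.
case: t ok ec ed => [|t] ok ec ed.
  have -> : c = a by lia. have -> : c' = a' by lia.
  have -> : d = b by lia. have -> : d' = b' by lia. lra.
case: k ok eb => [|[|k]] ok eb.
- case: t ok ec ed => [|t] ok ec ed; first by rewrite /allowed in ok.
  rewrite allowedtSS in ok.
  have H1 := F 2 t.+2 ltac:(by rewrite allowedtSS) a' a c' d ltac:(lia) ltac:(lia) ltac:(lia).
  have H2 := F 2 t ok a' a c d' ltac:(lia) ltac:(lia) ltac:(lia).
  have -> : b = a by lia. have -> : b' = a' by lia. lra.
- have H1 := F 1 t (@allowedK 1 _ erefl) b' a c d' ltac:(lia) ltac:(lia) ltac:(lia).
  have H2 := F 3 t.+1 (@allowedK 3 _ erefl) a' b c' d ltac:(lia) ltac:(lia) ltac:(lia).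
  lra.
rewrite allowedSS in ok.
have H1 := F k t.+1 ok a b' c d' ltac:(lia) ltac:(lia) ltac:(lia).
have H2 := F k.+4 t.+1 ltac:(by rewrite !allowedSS) a' b c' d ltac:(lia) ltac:(lia) ltac:(lia).
lra.
Qed.

Lemma expand A (F : Fam A) (w0 w1 w2 : R) k t (ok : allowed k t) (a b c d : int) :
  0 <= w0 -> 0 <= w1 -> 0 <= w2 ->
  b = a + Posz k -> c = a - Posz t -> d = a + Posz k + Posz t ->
  w0 ^+ 2 * (A a * A b - A c * A d)
  + w1 ^+ 2 * (A (a - 1) * A (b - 1) - A (c - 1) * A (d - 1))
  + w2 ^+ 2 * (A (a - 2) * A (b - 2) - A (c - 2) * A (d - 2))
  <= (w0 * A a + w1 * A (a - 1) + w2 * A (a - 2)) * (w0 * A b + w1 * A (b - 1) + w2 * A (b - 2))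
   - (w0 * A c + w1 * A (c - 1) + w2 * A (c - 2)) * (w0 * A d + w1 * A (d - 1) + w2 * A (d - 2)).
Proof.
move=> h0 h1 h2 eb ec ed.
have X1 := C1 F ok (a := a) (a' := a - 1) (b := b) (b' := b - 1) (c := c) (c' := c - 1)
  (d := d) (d' := d - 1) erefl eb erefl ec erefl ltac:(lia) erefl.
have X2 := C1 F ok (a := a - 1) (a' := a - 2) (b := b - 1) (b' := b - 2) (c := c - 1) (c' := c - 2)
  (d := d - 1) (d' := d - 2) ltac:(lia) ltac:(lia) ltac:(lia) ltac:(lia) ltac:(lia) ltac:(lia) ltac:(lia).
have X3 := C2 F ok (a := a) (a' := a - 2) (b := b) (b' := b - 2) (c := c) (c' := c - 2)
  (d := d) (d' := d - 2) erefl eb erefl ec erefl ltac:(lia) erefl.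
have Y1 := mulr_ge0 (mulr_ge0 h0 h1) X1.
have Y2 := mulr_ge0 (mulr_ge0 h1 h2) X2.
have Y3 := mulr_ge0 (mulr_ge0 h0 h2) X3.
lra.
Qed.

Lemma Fam_mul A (F : Fam A) (w0 w1 w2 : R) : 0 <= w0 -> 0 <= w1 -> 0 <= w2 ->
  Fam (fun x => w0 * A x + w1 * A (x - 1) + w2 * A (x - 2)).
Proof.
move=> h0 h1 h2 k t ok a b c d eb ec ed.
have E := expand F ok h0 h1 h2 eb ec ed.
have M0 := F k t ok a b c d eb ec ed.
have M1 := F k t ok (a - 1) (b - 1) (c - 1) (d - 1) ltac:(lia) ltac:(lia) ltac:(lia).
have M2 := F k t ok (a - 2) (b - 2) (c - 2) (d - 2) ltac:(lia) ltac:(lia) ltac:(lia).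
have N0 : 0 <= w0^+2 * (A a * A b - A c * A d) by rewrite mulr_ge0 ?sqr_ge0 // subr_ge0.
have N1 : 0 <= w1^+2 * (A (a - 1) * A (b - 1) - A (c - 1) * A (d - 1)) by rewrite mulr_ge0 ?sqr_ge0 // subr_ge0.
have N2 : 0 <= w2^+2 * (A (a - 2) * A (b - 2) - A (c - 2) * A (d - 2)) by rewrite mulr_ge0 ?sqr_ge0 // subr_ge0.
lra.
Qed.

Definition SI A (d : nat) := forall i : nat, (i < d)%N ->
  forall a b c e : int, a = Posz i -> b = a + 1 -> c = a - 1 -> e = a + 2 ->
  A c * A e < A a * A b.

Lemma grow A (F : Fam A) (w0 w1 w2 : R) d d' : 0 <= w0 -> 0 <= w1 -> 0 <= w2 ->
  SI A d ->
  (forall i : nat, (i < d')%N -> ((i < d)%N && (0 < w0)) || [&& (1 <= i <= d)%N & 0 < w1]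
       || [&& (2 <= i <= d.+1)%N & 0 < w2]) ->
  SI (fun x => w0 * A x + w1 * A (x - 1) + w2 * A (x - 2)) d'.
Proof.
move=> h0 h1 h2 S H i lti a b c e ea eb ec ee.
have E := expand F (@allowedK 1 1 erefl) h0 h1 h2 (a := a) (b := b) (c := c) (d := e)
  ltac:(lia) ltac:(lia) ltac:(lia).
have M0 := F 1 1 erefl a b c e ltac:(lia) ltac:(lia) ltac:(lia).
have M1 := F 1 1 erefl (a - 1) (b - 1) (c - 1) (e - 1) ltac:(lia) ltac:(lia) ltac:(lia).
have M2 := F 1 1 erefl (a - 2) (b - 2) (c - 2) (e - 2) ltac:(lia) ltac:(lia) ltac:(lia).
have N0 : 0 <= w0^+2 * (A a * A b - A c * A e) by rewrite mulr_ge0 ?sqr_ge0 // subr_ge0.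
have N1 : 0 <= w1^+2 * (A (a - 1) * A (b - 1) - A (c - 1) * A (e - 1)) by rewrite mulr_ge0 ?sqr_ge0 // subr_ge0.
have N2 : 0 <= w2^+2 * (A (a - 2) * A (b - 2) - A (c - 2) * A (e - 2)) by rewrite mulr_ge0 ?sqr_ge0 // subr_ge0.
rewrite -subr_gt0 /=; apply: lt_le_trans E.
case/orP: (H i lti) => [/orP[]|] /andP[Hi Hw].
- have P := S i Hi a b c e ea eb ec ee.
  have : 0 < w0^+2 * (A a * A b - A c * A e) by rewrite mulr_gt0 ?exprn_gt0 // subr_gt0.
  clear -N1 N2 P; lra.
- have P := S i.-1 ltac:(lia) (a - 1) (b - 1) (c - 1) (e - 1) ltac:(lia) ltac:(lia) ltac:(lia) ltac:(lia).
  have : 0 < w1^+2 * (A (a - 1) * A (b - 1) - A (c - 1) * A (e - 1)) by rewrite mulr_gt0 ?exprn_gt0 // subr_gt0.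
  clear -N0 N2 P; lra.
- have P := S i.-2 ltac:(lia) (a - 2) (b - 2) (c - 2) (e - 2) ltac:(lia) ltac:(lia) ltac:(lia) ltac:(lia).
  have : 0 < w2^+2 * (A (a - 2) * A (b - 2) - A (c - 2) * A (e - 2)) by rewrite mulr_gt0 ?exprn_gt0 // subr_gt0.
  clear -N0 N1 P; lra.
Qed.

End SeqPart.

Section PolyPart.
Variable R : realFieldType.

Definition Ac (p : {poly R}) (i : int) : R :=
  match i with Posz n => p`_n | Negz _ => 0 end.

Lemma Ac_neg p i : i < 0 -> Ac p i = 0. Proof. by case: i. Qed.

Definition W (w0 w1 w2 : R) : {poly R} := w0%:P + w1%:P * 'X + w2%:P * 'X^2.

Lemma coefMW p w0 w1 w2 n : (p * W w0 w1 w2)`_n =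
  w0 * p`_n + w1 * (if n == 0%N then 0 else p`_n.-1)
  + w2 * (if (n < 2)%N then 0 else p`_(n - 2)).
Proof.
rewrite /W !mulrDr !coefD !mulrA !coefMX !coefMC.
case: n => [|[|n]] /=; rewrite ?subn2 /=; lra.
Qed.

Lemma Ac_mulW p w0 w1 w2 x : Ac (p * W w0 w1 w2) x =
  w0 * Ac p x + w1 * Ac p (x - 1) + w2 * Ac p (x - 2).
Proof.
case: x => [n|n]; last first.
  by rewrite !Ac_neg ?mulr0 ?addr0 //; lia.
rewrite /= coefMW.
case: n => [|[|n]].
- by rewrite !Ac_neg //; lra.
- by rewrite (Ac_neg _ (_ : Posz 1 - 2 < 0)) //; lra.
have -> : Posz n.+2 - 1 = Posz n.+1 by lia.
have -> : Posz n.+2 - 2 = Posz n by lia.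
by rewrite /= subn2.
Qed.

Lemma Ac1 x : Ac 1 x = (x == 0)%:R.
Proof. by case: x => [n|n] //=; rewrite coef1. Qed.

Lemma Ac_ge0 (h : {poly R}) : (forall n, 0 <= h`_n) -> forall x, 0 <= Ac h x.
Proof. by move=> H [n|n] //=. Qed.

Definition Good (h : {poly R}) := (forall n, 0 <= h`_n) /\ Fam (Ac h).

Lemma Fam_ext (A B : int -> R) : (forall x, A x = B x) -> Fam A -> Fam B.
Proof. move=> E F k t ok a b c d eb ec ed; rewrite -!E; exact: F k t ok a b c d eb ec ed. Qed.

Lemma SI_ext (A B : int -> R) d : (forall x, A x = B x) -> SI A d -> SI B d.
Proof. move=> E S i lt a b c e ea eb ec ee; rewrite -!E; exact: S i lt a b c e ea eb ec ee. Qed.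

Lemma Good1 : Good 1.
Proof.
split=> [n|]; first by rewrite coef1 ler0n.
move=> k t ok a b c d eb ec ed; rewrite !Ac1.
case: t ok ec ed => [|t] ok ec ed.
  have -> : c = a by lia. have -> : d = b by lia. done.
have [c0|cn0] := eqVneq c 0.
  have /negPf -> : d != 0 by apply/eqP; lia.
  by rewrite mulr0 mulr_ge0 ?ler0n.
by rewrite mul0r mulr_ge0 ?ler0n.
Qed.

Lemma Good_mul (h : {poly R}) w0 w1 w2 : Good h -> 0 <= w0 -> 0 <= w1 -> 0 <= w2 ->
  Good (h * W w0 w1 w2).
Proof.
move=> [H F] h0 h1 h2; split.
  move=> n; have := Ac_mulW h w0 w1 w2 (Posz n); rewrite /= => ->.
  by rewrite !addr_ge0 // mulr_ge0 // Ac_ge0.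
apply: Fam_ext (fun x => esym (Ac_mulW h w0 w1 w2 x)) _.
exact: Fam_mul.
Qed.

Lemma SI_base1 c : 0 < c -> SI (Ac (1 * W c 1 0)) 1.
Proof.
move=> hc [|//] _ a b c' e -> -> -> ->; rewrite !Ac_mulW !Ac1 /=.
lra.
Qed.

Lemma SI_base2 q p : 0 < q -> 0 < p -> SI (Ac (1 * W q p 1)) 2.
Proof.
move=> hq hp [|[|//]] _ a b c' e -> -> -> ->; rewrite !Ac_mulW !Ac1 /=; nra.
Qed.

Lemma grow_lin (h : {poly R}) d c : Good h -> SI (Ac h) d -> (0 < d)%N -> 0 < c ->
  SI (Ac (h * W c 1 0)) d.+1.
Proof.
move=> [H F] S d0 hc.
apply: SI_ext (fun x => esym (Ac_mulW h c 1 0 x)) _.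
apply: (grow (d := d) F) => //; try lra.
move=> i lti; case: (ltnP i d) => hid; first by rewrite hc.
by apply/orP; left; apply/orP; right; rewrite ltr01 andbT; apply/andP; split; lia.
Qed.

Lemma grow_quad (h : {poly R}) d q p : Good h -> SI (Ac h) d -> 0 < q -> 0 <= p ->
  ((2 <= d)%N \/ ((0 < d)%N /\ 0 < p)) ->
  SI (Ac (h * W q p 1)) d.+2.
Proof.
move=> [H F] S hq hp hd.
apply: SI_ext (fun x => esym (Ac_mulW h q p 1 x)) _.
apply: (grow (d := d) F) => //; try lra.
move=> i lti; case: (ltnP i d) => hid; first by rewrite hq.
case: hd => [hd|[hd hp']].
  by apply/orP; right; rewrite ltr01 andbT; apply/andP; split; lia.
case: (ltnP i 2) => hi.
  by apply/orP; left; apply/orP; right; rewrite hp' andbT; apply/andP; split; lia.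
by apply/orP; right; rewrite ltr01 andbT; apply/andP; split; lia.
Qed.

End PolyPart.

Section Cplx.
Variable R : rcfType.
Local Notation mp := (map_poly (real_complex R)).

Lemma mp_inj : injective mp. Proof. exact: map_poly_inj. Qed.

Lemma mpW w0 w1 w2 : mp (W w0 w1 w2) = (w0%:C)%C%:P + (w1%:C)%C%:P * 'X + (w2%:C)%C%:P * 'X^2.
Proof. by rewrite /W !rmorphD !rmorphM /= !map_polyC !map_polyX -expr2. Qed.

Lemma conj_root (h : {poly R}) z : root (mp h) z -> root (mp h) (z^*)%C.
Proof.
rewrite -complex_root_conj; suff -> : map_poly conjc (mp h) = mp h by [].
rewrite -map_poly_comp; apply: eq_map_poly => y /=; exact: conjc_real.
Qed.

Lemma peel_real (s : seq R[i]) (h : {poly R}) z : z \in s -> complex.Im z = 0 ->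
  mp h = \prod_(y <- s) ('X - y%:P) ->
  exists h', h = h' * W (- complex.Re z) 1 0 /\ mp h' = \prod_(y <- rem z s) ('X - y%:P).
Proof.
move=> zs z0 E; rewrite (perm_big _ (perm_to_rem zs)) big_cons in E.
have eqW : mp (W (- complex.Re z) 1 0) = 'X - z%:P.
  rewrite mpW; case: z z0 {zs E} => a b /= ->.
  rewrite -[(a +i* 0)%C]/((a%:C)%C) (rmorphN (real_complex R)) (rmorph1 (real_complex R)) (rmorph0 (real_complex R)).
  by rewrite polyCN polyC1 polyC0 mul1r mul0r addr0 addrC.
have nz : mp (W (- complex.Re z) 1 0) != 0 by rewrite eqW polyXsubC_eq0.
exists (h %/ W (- complex.Re z) 1 0).
have E' : mp (h %/ W (- complex.Re z) 1 0) = \prod_(y <- rem z s) ('X - y%:P).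
  by rewrite map_divp E -eqW mulKp.
split=> //; apply: mp_inj; by rewrite rmorphM /= E' E eqW mulrC.
Qed.

Lemma peel_imag (s : seq R[i]) (h : {poly R}) z : z \in s -> complex.Im z != 0 ->
  mp h = \prod_(y <- s) ('X - y%:P) ->
  (z^*)%C \in rem z s /\
  exists h', h = h' * W (complex.Re z ^+ 2 + complex.Im z ^+ 2) (- (2 * complex.Re z)) 1 /\
    mp h' = \prod_(y <- rem (z^*)%C (rem z s)) ('X - y%:P).
Proof.
move=> zs z0 E.
have zcs : (z^*)%C \in s.
  rewrite -root_prod_XsubC -E; apply: conj_root; by rewrite E root_prod_XsubC.
have zcr : (z^*)%C \in rem z s.
  apply: rem_mem zcs; apply/eqP; case: z z0 {zs E} => a b /= b0 [] /eqP.
  move/eqP => e; move: b0; have -> : b = 0 by lra. by rewrite eqxx.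
split=> //.
rewrite (perm_big _ (perm_to_rem zs)) big_cons (perm_big _ (perm_to_rem zcr)) big_cons in E.
have eqW : mp (W (complex.Re z ^+ 2 + complex.Im z ^+ 2) (- (2 * complex.Re z)) 1) = ('X - z%:P) * ('X - (z^*)%C%:P).
  rewrite mpW.
  have -> : ((complex.Re z ^+ 2 + complex.Im z ^+ 2)%:C)%C = z * (z^*)%C.
    by case: z {zs E zcs zcr z0} => a b /=; apply/eqP; rewrite eq_complex /=; apply/andP; split; apply/eqP; ring.
  have -> : ((- (2 * complex.Re z))%:C)%C = - (z + (z^*)%C).
    by case: z {zs E zcs zcr z0} => a b /=; apply/eqP; rewrite eq_complex /=; apply/andP; split; apply/eqP; ring.
  rewrite (rmorph1 (real_complex R)) polyC1 mul1r polyCM polyCN polyCD.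
  ring.
have nz : mp (W (complex.Re z ^+ 2 + complex.Im z ^+ 2) (- (2 * complex.Re z)) 1) != 0.
  by rewrite eqW mulf_neq0 // polyXsubC_eq0.
exists (h %/ W (complex.Re z ^+ 2 + complex.Im z ^+ 2) (- (2 * complex.Re z)) 1).
have E' : mp (h %/ W (complex.Re z ^+ 2 + complex.Im z ^+ 2) (- (2 * complex.Re z)) 1) =
   \prod_(y <- rem (z^*)%C (rem z s)) ('X - y%:P).
  by rewrite map_divp (etrans E (mulrA _ _ _)) -eqW mulKp.
split=> //; apply: mp_inj; by rewrite rmorphM /= E' (etrans E (mulrA _ _ _)) eqW mulrC.
Qed.

End Cplx.

Section Ind.
Variable R : rcfType.
Local Notation mp := (map_poly (real_complex R)).

Lemma mp_one (h : {poly R}) : mp h = 1 -> h = 1.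
Proof. by move=> E; apply: mp_inj; rewrite E rmorph1. Qed.

Definition excl (h : {poly R}) := exists (mu : R) (m : nat) (beta : 'I_m -> R),
  0 < mu /\ (forall j, 0 < beta j) /\
  h = ('X + mu%:P) * \prod_(j < m) ('X ^+ 2 + (beta j ^+ 2)%:P).

Lemma excl_ext (h : {poly R}) q p : excl h -> 0 < q -> p = 0 -> excl (h * W q p 1).
Proof.
move=> [mu [m [beta [hmu [hb ->]]]]] hq ->.
exists mu, m.+1,
  (fun j : 'I_m.+1 => if unlift ord_max j is Some j' then beta j' else Num.sqrt q).
split=> //; split.
  by move=> j; case: unliftP => [j' _|_]; [exact: hb | rewrite sqrtr_gt0].
rewrite big_ord_recr /= unlift_none -mulrA; congr (_ * (_ * _)).
  apply: eq_bigr => j _.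
  have -> : widen_ord (leqnSn m) j = lift ord_max j by apply: ord_inj; rewrite lift_max.
  by rewrite liftK.
by rewrite sqr_sqrtr ?(ltW hq) // /W polyC0 mul0r addr0 polyC1 mul1r addrC.
Qed.

Lemma good_all n : forall (s : seq R[i]) (h : {poly R}), (size s <= n)%N ->
  mp h = \prod_(y <- s) ('X - y%:P) -> all (fun y => complex.Re y <= 0) s -> Good h.
Proof.
elim: n => [|n IH] s h.
  case: s => // _ E _; rewrite big_nil in E; rewrite (mp_one E); exact: Good1.
case: s => [|z s0] hs E Hall.
  rewrite big_nil in E; rewrite (mp_one E); exact: Good1.
have zs := mem_head z s0.
have Hz : complex.Re z <= 0 by move/allP: Hall => /(_ z zs).
have Hsub : forall t, {subset t <= z :: s0} -> all (fun y => complex.Re y <= 0) t.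
  by move=> t st; apply/allP => y /st ys; move/allP: Hall => /(_ y ys).
case: (eqVneq (complex.Im z) 0) => z0.
  have [h' [-> E']] := peel_real zs z0 E.
  have G : Good h'.
    apply: IH E' _; first by rewrite size_rem //=.
    by apply: Hsub => y /mem_rem.
  apply: Good_mul G _ _ _; lra.
have [zc [h' [-> E']]] := peel_imag zs z0 E.
have G : Good h'.
  apply: IH E' _.
    by rewrite size_rem // size_rem //= (leq_trans (leq_pred _)).
  by apply: Hsub => y /mem_rem /mem_rem.
apply: Good_mul G _ _ _; try lra.
by rewrite addr_ge0 // sqr_ge0.
Qed.

Lemma good_of (s : seq R[i]) (h : {poly R}) :
  mp h = \prod_(y <- s) ('X - y%:P) -> all (fun y => complex.Re y < 0) s -> Good h.
Proof.
move=> E Hall; apply: (good_all (leqnn (size s)) E).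
by apply/allP => y ys; apply: ltW; move/allP: Hall => /(_ y ys).
Qed.

Lemma SI_B n : forall (s : seq R[i]) (h : {poly R}), (size s <= n)%N ->
  mp h = \prod_(y <- s) ('X - y%:P) -> all (fun y => complex.Re y < 0) s ->
  (0 < size s)%N -> SI (Ac h) (size s).
Proof.
elim: n => [|n IH] s h; first by case: s.
case: s => [//|z s0] hs E Hall _.
have zs := mem_head z s0.
have Hz : complex.Re z < 0 by move/allP: Hall => /(_ z zs).
have Hs0 : all (fun y => complex.Re y < 0) s0 by move: Hall => /= /andP[].
case: (eqVneq (complex.Im z) 0) => z0.
  have [h' [-> E']] := peel_real zs z0 E.
  rewrite /= eqxx in E'.
  clear zs; case: s0 hs E Hall Hs0 E' => [|y s1] hs E Hall Hs0 E'.
    rewrite big_nil in E'; rewrite (mp_one E').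
    by apply: SI_base1; lra.
  have S := IH (y :: s1) h' hs E' Hs0 erefl.
  have G := good_of E' Hs0.
  by apply: (grow_lin G S) => //; lra.
have [zc [h' [-> E']]] := peel_imag zs z0 E.
rewrite /= eqxx in zc E'.
have hq : 0 < complex.Re z ^+ 2 + complex.Im z ^+ 2.
  by rewrite ltr_pwDr ?sqr_ge0 // exprn_even_gt0.
have hp : 0 < - (2 * complex.Re z) by lra.
have Hs1 : all (fun y => complex.Re y < 0) (rem (z^*)%C s0).
  by apply/allP => y /mem_rem ys; move/allP: Hs0 => /(_ y ys).
have sz : size (z :: s0) = (size (rem (z^*)%C s0)).+2.
  rewrite size_rem //=; case: (s0) zc => //.
rewrite sz.
case: (rem (z^*)%C s0) E' Hs1 sz => [|y s1] E' Hs1 sz.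
  rewrite big_nil in E'; rewrite (mp_one E').
  by apply: SI_base2; lra.
have S := IH _ _ _ E' Hs1 erefl.
have G := good_of E' Hs1.
have S' : SI (Ac h') (size (y :: s1)) by apply: S; move: hs; rewrite sz ltnS => /ltnW.
by apply: (grow_quad G S' hq (ltW hp)); right; split.
Qed.

Lemma ReJ (z : R[i]) : complex.Re (z^*)%C = complex.Re z.
Proof. by case: z. Qed.

Lemma SI_C n : forall (s : seq R[i]) (h : {poly R}), (size s <= n)%N ->
  mp h = \prod_(y <- s) ('X - y%:P) ->
  all (fun y => (complex.Re y <= 0) && (y != 0)) s ->
  has (fun y => complex.Re y < 0) s -> ~ excl h -> SI (Ac h) (size s).
Proof.
elim: n => [|n IH] s h; first by case: s.
move=> hs E Hall Hhas Hex.
case: (boolP (has (fun y => complex.Re y == 0) s)) => H0; last first.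
  apply: (SI_B hs E); last by case: (s) Hhas.
  apply/allP => y ys; have /andP[le _] := allP Hall y ys.
  by rewrite lt_neqAle le andbT; exact: (hasPn H0 y ys).
case/hasP: H0 => z zs /eqP zr.
have z0 : complex.Im z != 0.
  have /andP[_ nz] := allP Hall z zs; apply: contraNneq nz.
  by case: (z) zr => a b /= -> ->.
have [zc [h' [Eh E']]] := peel_imag zs z0 E.
have sz : size s = (size (rem (z^*)%C (rem z s))).+2.
  have p1 : (0 < size (rem z s))%N by case: (rem z s) zc.
  rewrite (size_rem zc); rewrite (size_rem zs) in p1 *.
  by case: (size s) p1 => [|[|k]].
have Hs1 : all (fun y => (complex.Re y <= 0) && (y != 0)) (rem (z^*)%C (rem z s)).
  by apply/allP => y /mem_rem /mem_rem ys; apply: (allP Hall).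
have Hhas1 : has (fun y => complex.Re y < 0) (rem (z^*)%C (rem z s)).
  case/hasP: Hhas => y ys yr; apply/hasP; exists y => //.
  apply: rem_mem; first by apply/eqP => e; move: yr; rewrite e ReJ zr ltxx.
  by apply: rem_mem ys; apply/eqP => e; move: yr; rewrite e zr ltxx.
have hq : 0 < complex.Re z ^+ 2 + complex.Im z ^+ 2.
  by rewrite ltr_pwDr ?sqr_ge0 // exprn_even_gt0.
have Hex1 : ~ excl h'.
  move=> X; apply: Hex; rewrite Eh; apply: excl_ext X hq _.
  by rewrite zr mulr0 oppr0.
have hs1 : (size (rem (z^*)%C (rem z s)) <= n)%N by move: hs; rewrite sz ltnS => /ltnW.
have S := IH _ h' hs1 E' Hs1 Hhas1 Hex1.
have G : Good h'.
  apply: (good_all (leqnn _) E').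
  by apply/allP => y ys; have /andP[] := allP Hs1 y ys.
rewrite sz Eh; apply: (grow_quad G S hq) => //; first by rewrite zr mulr0 oppr0.
left.
move: E' Hs1 Hhas1 Hex1 {S G sz hs1}.
case: (rem (z^*)%C (rem z s)) => [|y [|y2 s2]] //= E' Hs1 Hhas1 Hex1.
exfalso; apply: Hex1.
have yr : complex.Re y < 0 by move: Hhas1; rewrite orbF.
have ys : y \in [:: y] by rewrite mem_seq1.
case: (eqVneq (complex.Im y) 0) => y0; last first.
  by have [+ _] := peel_imag ys y0 E'; rewrite /= eqxx.
have [h'' [-> E'']] := peel_real ys y0 E'.
rewrite /= eqxx big_nil in E''; rewrite (mp_one E'').
exists (- complex.Re y), 0%N, (fun _ => 1); split; first by lra.
split=> [[]//|].
by rewrite mul1r big_ord0 mulr1 /W polyC1 mul1r polyC0 mul0r addr0 addrC.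
Qed.

End Ind.

Lemma coef_f (R : realFieldType) (f h : {poly R}) r : f = ('X - r%:P) * h ->
  forall m : nat, f`_m = Ac h (Posz m - 1) - r * Ac h (Posz m).
Proof.
move=> -> m; rewrite mulrBl coefB coefXM coefCM.
case: m => [|m]; first by rewrite Ac_neg //= subr0.
by have -> : Posz m.+1 - 1 = Posz m by lia.
Qed.

(* x j (j : 'I_n.-1) stands for the paper's x_{j+2};  a_k = f`_(n - k). *)
Theorem theorem4p5 (R : rcfType) (n : nat) (f : {poly R}) (r : R)
    (x : 'I_n.-1 -> R[i]) :
    (1 <= n)%N ->
    0 < r ->
    (forall j, x j != 0) ->
    (forall j, complex.Re (x j) <= 0) ->
    (exists j, complex.Re (x j) < 0) ->
    map_poly (real_complex R) f =
      ('X - (r%:C)%C%:P) * \prod_(j < n.-1) ('X - (x j)%:P) ->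
    ~ excluded_form (\prod_(j < n.-1) ('X - (x j)%:P)) ->
    forall k : nat, (1 <= k <= n - 2)%N ->
      f`_(n - k) <= 0 -> f`_(n - (k + 2)) < 0.
Proof.
move=> n1 r0 xnz xre [j0 xj0] Ef Nex k /andP[k1 k2] hk.
have EP : \prod_(j < n.-1) ('X - (x j)%:P) = \prod_(y <- map x (enum 'I_n.-1)) ('X - y%:P).
  by rewrite big_map big_enum.
have hX : map_poly (real_complex R) ('X - r%:P) = 'X - (r%:C)%C%:P.
  by rewrite rmorphB /= map_polyX map_polyC.
pose h := f %/ ('X - r%:P).
have Eh : map_poly (real_complex R) h = \prod_(j < n.-1) ('X - (x j)%:P).
  by rewrite map_divp Ef hX mulKp // polyXsubC_eq0.
have Ef' : f = ('X - r%:P) * h.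
  by apply: mp_inj; rewrite rmorphM /= hX Eh Ef.
have Es : map_poly (real_complex R) h = \prod_(y <- map x (enum 'I_n.-1)) ('X - y%:P).
  by rewrite Eh EP.
have szs : size (map x (enum 'I_n.-1)) = n.-1 by rewrite size_map size_enum_ord.
have Hall : all (fun y => (complex.Re y <= 0) && (y != 0)) (map x (enum 'I_n.-1)).
  by apply/allP => y /mapP [j _ ->]; rewrite xre xnz.
have Hhas : has (fun y => complex.Re y < 0) (map x (enum 'I_n.-1)).
  by apply/hasP; exists (x j0) => //; apply: map_f; rewrite mem_enum.
have Hex : ~ excl h.
  move=> [mu [m [beta [hmu [hb eh]]]]]; apply: Nex; exists mu, m, beta.
  by split=> //; split=> //; rewrite -Eh eh.
have S := SI_C (leqnn _) Es Hall Hhas Hex; rewrite szs in S.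
have [Hnn F] : Good h.
  apply: (good_all (leqnn _) Es).
  by apply/allP => y ys; have /andP[] := allP Hall y ys.
pose i := (n - k - 2)%N.
have S1 := S i ltac:(rewrite /i; lia) (Posz i) (Posz i + 1) (Posz i - 1) (Posz i + 2)
  erefl erefl erefl erefl.
have S2 := S i.+1 ltac:(rewrite /i; lia) (Posz i + 1) (Posz i + 2) (Posz i) (Posz i + 3)
  ltac:(lia) ltac:(lia) ltac:(lia) ltac:(lia).
rewrite !(coef_f Ef') in hk *.
have -> : Posz (n - (k + 2)) = Posz i by rewrite /i; lia.
have e1 : Posz (n - k) - 1 = Posz i + 1 by rewrite /i; lia.
have e2 : Posz (n - k) = Posz i + 2 by rewrite /i; lia.
rewrite e1 e2 in hk.
have g0 := Ac_ge0 Hnn (Posz i).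
have g1 := Ac_ge0 Hnn (Posz i + 1).
have g2 := Ac_ge0 Hnn (Posz i + 2).
have g3 := Ac_ge0 Hnn (Posz i + 3).
have p2 : 0 < Ac h (Posz i + 2).
  rewrite lt_neqAle g2 andbT; apply/eqP => e.
  move: S2; rewrite -e mulr0 => S2.
  have := mulr_ge0 g0 g3; lra.
have hk' : Ac h (Posz i) * (Ac h (Posz i + 1) - r * Ac h (Posz i + 2)) <= 0.
  by rewrite mulr_ge0_le0.
have : (Ac h (Posz i - 1) - r * Ac h (Posz i)) * Ac h (Posz i + 2) < 0 by lra.
by rewrite pmulr_llt0.
Qed.
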